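(* Let $A,B\subseteq2^\omega$ and suppose $B$ has empty interior in $2^\omega$. Regard $A,B$ also as subsets of the Baire space $\omega^\omega$. If $A\le^*_L B$ then $A\le_L B$, and if $A\le^*_W B$ then $A\le_W B$.
   Context: $2^\omega$ (Cantor space) and $\omega^\omega$ (Baire space) carry the product topologies and the metric $d(x,y)=2^{-\min\{n:x(n)\neq y(n)\}}$ ($d(x,x)=0$). For $A,B\subseteq2^\omega$: $A\le_W B$ iff $A=f^{-1}(B)$ for some continuous $f:2^\omega\to2^\omega$; $A\le_L B$ iff this holds with $f$ Lipschitz with constant $1$ (i.e. $d(f(x),f(y))\le d(x,y)$). $A\le^*_W B$ (resp. $A\le^*_L B$) means $A=f^{-1}(B)$ for some continuous (resp. $1$-Lipschitz) $f:\omega^\omega\to\omega^\omega$, with $A,B$ viewed as subsets of $\omega^\omega$. *)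

(* Defs.v *)
Set Implicit Arguments.

(* x and y agree on the first n coordinates, i.e. d(x,y) <= 2^{-n}
   for the metric d(x,y) = 2^{-min{n : x n <> y n}} (d(x,x)=0). *)
Definition agree {X : Type} (x y : nat -> X) (n : nat) : Prop :=
  forall i, i < n -> x i = y i.

(* Continuity w.r.t. the product topology (= metric topology of d). *)
Definition continuous {X Y : Type} (f : (nat -> X) -> (nat -> Y)) : Prop :=
  forall (x : nat -> X) (n : nat), exists m : nat,
    forall y, agree x y m -> agree (f x) (f y) n.

(* Lipschitz with constant 1: d(f x, f y) <= d(x, y).  Since d takes values in
   {0} u {2^{-k}}, this says: d(x,y) <= 2^{-n} implies d(f x, f y) <= 2^{-n}. *)
Definition lipschitz1 {X Y : Type} (f : (nat -> X) -> (nat -> Y)) : Prop :=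
  forall (x y : nat -> X) (n : nat), agree x y n -> agree (f x) (f y) n.

Definition preimage_eq {X Y : Type} (A : (nat -> X) -> Prop) (B : (nat -> Y) -> Prop)
  (f : (nat -> X) -> (nat -> Y)) : Prop :=
  forall x, A x <-> B (f x).

Definition wadge_le {X : Type} (A B : (nat -> X) -> Prop) : Prop :=
  exists f, continuous f /\ preimage_eq A B f.
Definition lip_le {X : Type} (A B : (nat -> X) -> Prop) : Prop :=
  exists f, lipschitz1 f /\ preimage_eq A B f.

Definition empty_interior {X : Type} (B : (nat -> X) -> Prop) : Prop :=
  forall (x : nat -> X) (n : nat), exists y, agree x y n /\ ~ B y.

Definition bool_to_nat (b : bool) : nat := if b then 1 else 0.
Definition to_baire (A : (nat -> bool) -> Prop) : (nat -> nat) -> Prop :=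
  fun x => exists c, A c /\ forall n, x n = bool_to_nat (c n).

(* Main.v *)
Require Import Defs.
From Stdlib Require Import Arith Lia ClassicalEpsilon FunctionalExtensionality Classical.

Fixpoint firstbad (h : nat -> nat) (i : nat) : option nat :=
  match i with
  | 0 => if 1 <? h 0 then Some 0 else None
  | S i' => match firstbad h i' with
            | Some k => Some k
            | None => if 1 <? h (S i') then Some (S i') else None
            end
  end.

Lemma fb_none h i : firstbad h i = None -> forall j, j <= i -> h j <= 1.
Proof.
  induction i; simpl; intros H j Hj.
  - destruct (1 <? h 0) eqn:E; [discriminate|]. apply Nat.ltb_ge in E.
    assert (j = 0) by lia; subst; lia.
  - destruct (firstbad h i) eqn:F; [discriminate|].
    destruct (1 <? h (S i)) eqn:E; [discriminate|]. apply Nat.ltb_ge in E.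
    destruct (Nat.eq_dec j (S i)); [subst; lia|]. apply IHi; auto; lia.
Qed.

Lemma fb_some h i k : firstbad h i = Some k ->
  k <= i /\ 1 < h k /\ forall j, j < k -> h j <= 1.
Proof.
  revert k; induction i; simpl; intros k H.
  - destruct (1 <? h 0) eqn:E; [|discriminate]. inversion H; subst.
    apply Nat.ltb_lt in E. repeat split; auto; lia.
  - destruct (firstbad h i) eqn:F.
    + inversion H; subst. destruct (IHi k eq_refl) as [? [? ?]]. repeat split; auto; lia.
    + destruct (1 <? h (S i)) eqn:E; [|discriminate]. inversion H; subst.
      apply Nat.ltb_lt in E. repeat split; auto.
      intros; apply (fb_none h i F); lia.
Qed.

Lemma fb_after h i k : firstbad h i = Some k -> forall i', k <= i' -> firstbad h i' = Some k.
Proof.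
  intros H i' Hi. destruct (fb_some h i k H) as [_ [Hk Hm]].
  destruct (firstbad h i') eqn:F.
  - destruct (fb_some h i' n F) as [_ [Hn Hm']]. f_equal.
    destruct (lt_eq_lt_dec n k) as [[?|?]|?]; auto.
    + specialize (Hm n); lia.
    + specialize (Hm' k); lia.
  - pose proof (fb_none h i' F k Hi); lia.
Qed.

Lemma fb_before h i k : firstbad h i = Some k -> forall i', i' < k -> firstbad h i' = None.
Proof.
  intros H i' Hi. destruct (fb_some h i k H) as [_ [Hk Hm]].
  destruct (firstbad h i') eqn:F; auto.
  destruct (fb_some h i' n F) as [? [? _]]. specialize (Hm n); lia.
Qed.

Lemma fb_local h h' i : agree h h' (S i) -> firstbad h i = firstbad h' i.
Proof.
  induction i; simpl; intros H.
  - rewrite (H 0) by lia. reflexivity.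
  - rewrite IHi by (intros j Hj; apply H; lia). rewrite (H (S i)) by lia. reflexivity.
Qed.

Section G.
Variable B : (nat -> bool) -> Prop.
Hypothesis HB : empty_interior B.

Definition zz (h : nat -> nat) (n : nat) : nat -> bool :=
  fun j => if j <? n then Nat.eqb (h j) 1 else false.

Definition Y (z : nat -> bool) (n : nat) : nat -> bool :=
  proj1_sig (constructive_indefinite_description _ (HB z n)).

Lemma Y_spec z n : agree z (Y z n) n /\ ~ B (Y z n).
Proof. unfold Y. destruct constructive_indefinite_description; auto. Qed.

Definition G (h : nat -> nat) : nat -> bool := fun i =>
  match firstbad h i with
  | None => Nat.eqb (h i) 1
  | Some n => Y (zz h n) n i
  end.

Lemma G_local h h' i : agree h h' (S i) -> G h i = G h' i.
Proof.
  intros H. unfold G. rewrite <- (fb_local h h' i H).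
  destruct (firstbad h i) eqn:F.
  - destruct (fb_some h i n F) as [Hn _].
    replace (zz h' n) with (zz h n); auto.
    apply functional_extensionality; intro j; unfold zz.
    destruct (j <? n) eqn:E; auto. apply Nat.ltb_lt in E. rewrite (H j) by lia; auto.
  - rewrite (H i) by lia; auto.
Qed.

Lemma G_good h : (forall i, h i <= 1) -> forall i, h i = bool_to_nat (G h i).
Proof.
  intros H i. unfold G. destruct (firstbad h i) eqn:F.
  - destruct (fb_some h i n F) as [_ [? _]]. specialize (H n); lia.
  - specialize (H i). destruct (h i) as [|[|]]; simpl; auto; lia.
Qed.

Lemma G_bad h j : 1 < h j -> ~ B (G h).
Proof.
  intros Hj. destruct (firstbad h j) eqn:F.
  2:{ pose proof (fb_none h j F j (le_n _)); lia. }
  destruct (Y_spec (zz h n) n) as [Ha Hnb].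
  replace (G h) with (Y (zz h n) n); auto.
  apply functional_extensionality; intro i. unfold G.
  destruct (le_lt_dec n i).
  - rewrite (fb_after h j n F i l). auto.
  - rewrite (fb_before h j n F i l). rewrite <- Ha by auto. unfold zz.
    apply Nat.ltb_lt in l. rewrite l. auto.
Qed.

End G.

Definition emb (c : nat -> bool) : nat -> nat := fun n => bool_to_nat (c n).

Lemma bool_to_nat_inj a b : bool_to_nat a = bool_to_nat b -> a = b.
Proof. destruct a, b; simpl; congruence. Qed.

Lemma key (A B : (nat -> bool) -> Prop) (HB : empty_interior B) f :
  preimage_eq (to_baire A) (to_baire B) f ->
  preimage_eq A B (fun c => G B HB (f (emb c))).
Proof.
  intros Hf c.
  assert (HA : A c <-> to_baire A (emb c)).
  { split.
    - intros; exists c; split; auto; reflexivity.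
    - intros [c' [Hc' He]]. replace c with c'; auto.
      apply functional_extensionality; intro n. symmetry. apply bool_to_nat_inj. apply He. }
  rewrite HA, (Hf (emb c)). set (h := f (emb c)).
  destruct (classic (exists j, 1 < h j)) as [[j Hj]|Hn].
  - split.
    + intros [c' [_ He]]. rewrite He in Hj. destruct (c' j); simpl in Hj; lia.
    + intros HBG. exfalso. exact (G_bad B HB h j Hj HBG).
  - assert (Hg : forall i, h i <= 1).
    { intro i. destruct (le_lt_dec (h i) 1); auto. exfalso; apply Hn; eauto. }
    pose proof (G_good B HB h Hg) as E.
    split.
    + intros [c' [Hc' He]]. replace (G B HB h) with c'; auto.
      apply functional_extensionality; intro n. apply bool_to_nat_inj. rewrite <- He, <- E; auto.
    + intros HG. exists (G B HB h). auto.
Qed.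

Lemma agree_emb c c' n : agree c c' n -> agree (emb c) (emb c') n.
Proof. intros H i Hi. unfold emb. rewrite (H i Hi). auto. Qed.

Theorem lemma4p1 (A B : (nat -> bool) -> Prop) :
  empty_interior B ->
  (lip_le (to_baire A) (to_baire B) -> lip_le A B) /\
  (wadge_le (to_baire A) (to_baire B) -> wadge_le A B).
Proof.
  intros HB. split.
  - intros [f [Hl Hp]]. exists (fun c => G B HB (f (emb c))). split.
    + intros c c' n H i Hi. apply G_local.
      intros j Hj. apply (Hl _ _ n (agree_emb _ _ _ H)). lia.
    + apply key; auto.
  - intros [f [Hc Hp]]. exists (fun c => G B HB (f (emb c))). split.
    + intros c n. destruct (Hc (emb c) n) as [m Hm]. exists m.
      intros c' H i Hi. apply G_local.
      intros j Hj. apply (Hm _ (agree_emb _ _ _ H)). lia.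
    + apply key; auto.
Qed.
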